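(* Let $I$ be an ideal on a cardinal $\kappa$ and let $\theta$ be a regular cardinal. Then $I$ is $\theta$-decomposable (i.e. not $\theta$-indecomposable) if and only if there is a sequence $\langle A_i:i<\theta\rangle$ of $I$-positive subsets of $\kappa$ which are pairwise equal modulo $I$ and satisfy $\bigcap_{i<\theta}\bigcup_{i\leq j<\theta}A_j=\emptyset$.
   Context: By an ideal on a cardinal $\kappa$ we mean a proper ideal on $\kappa$ containing all bounded subsets of $\kappa$. $A$ is $I$-positive if $A\notin I$; $A,B$ are equal modulo $I$ if $A\setminus B\in I$ and $B\setminus A\in I$. $I$ is $\theta$-indecomposable if whenever $\langle A_i:i<\theta\rangle$ are subsets of $\kappa$ with $\bigcup_{i<\theta}A_i\notin I$, there is $w\subseteq\theta$ with $|w|<\theta$ and $\bigcup_{i\in w}A_i\notin I$. *)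

(* Defs.v *)
(* Ordinals/cardinals are represented by well-ordered types:
   a cardinal kappa is a type K with a strict well-order ltK such that
   K is an initial ordinal (no proper initial segment is equinumerous with K,
   i.e. K does not inject into any proper initial segment). *)
From Stdlib Require Import Classical.

Set Implicit Arguments.

Definition strict_well_order {T : Type} (lt : T -> T -> Prop) : Prop :=
  (forall x, ~ lt x x) /\
  (forall x y z, lt x y -> lt y z -> lt x z) /\
  (forall x y, lt x y \/ x = y \/ lt y x) /\
  well_founded lt.

Definition leT {T : Type} (lt : T -> T -> Prop) (x y : T) : Prop :=
  lt x y \/ x = y.

Definition injects (A B : Type) : Prop :=
  exists f : A -> B, forall x y, f x = f y -> x = y.

Definition is_cardinal {T : Type} (lt : T -> T -> Prop) : Prop :=
  strict_well_order lt /\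
  forall a : T, ~ injects T {y : T | lt y a}.

Definition small {T : Type} (w : T -> Prop) : Prop :=
  ~ injects T {x : T | w x}.

Definition bounded {T : Type} (lt : T -> T -> Prop) (X : T -> Prop) : Prop :=
  exists a : T, forall x, X x -> lt x a.

(* regular cardinal: an infinite cardinal theta whose cofinality is theta,
   i.e. every unbounded (cofinal) subset has cardinality theta *)
Definition regular_cardinal {T : Type} (lt : T -> T -> Prop) : Prop :=
  is_cardinal lt /\
  injects nat T /\
  forall X : T -> Prop, ~ bounded lt X -> injects T {x : T | X x}.

Definition ideal_on {K : Type} (lt : K -> K -> Prop)
  (I : (K -> Prop) -> Prop) : Prop :=
  I (fun _ => False) /\
  (forall A B : K -> Prop, I B -> (forall x, A x -> B x) -> I A) /\
  (forall A B : K -> Prop, I A -> I B -> I (fun x => A x \/ B x)) /\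
  ~ I (fun _ => True) /\
  (forall A : K -> Prop, bounded lt A -> I A).

Definition positive {K : Type} (I : (K -> Prop) -> Prop) (A : K -> Prop) : Prop :=
  ~ I A.

Definition eq_mod {K : Type} (I : (K -> Prop) -> Prop) (A B : K -> Prop) : Prop :=
  I (fun x => A x /\ ~ B x) /\ I (fun x => B x /\ ~ A x).

(* I is theta-indecomposable (theta given as the cardinal type Th) *)
Definition indecomposable {K Th : Type} (I : (K -> Prop) -> Prop) : Prop :=
  forall A : Th -> K -> Prop,
    ~ I (fun x => exists i, A i x) ->
    exists w : Th -> Prop, small w /\ ~ I (fun x => exists i, w i /\ A i x).

(* Main.v *)
Require Import Defs.
From Stdlib Require Import Classical ProofIrrelevance.

Theorem proposition2p2 (K : Type) (ltK : K -> K -> Prop) (HK : is_cardinal ltK)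
  (I : (K -> Prop) -> Prop) (HI : ideal_on ltK I)
  (Th : Type) (ltT : Th -> Th -> Prop) (HT : regular_cardinal ltT) :
  ~ @indecomposable K Th I <->
  exists A : Th -> K -> Prop,
    (forall i, positive I (A i)) /\
    (forall i j, eq_mod I (A i) (A j)) /\
    (forall x : K, ~ (forall i : Th, exists j : Th, leT ltT i j /\ A j x)).
Proof.
  destruct HT as [HTc [[g Hg] Hreg]].
  destruct HTc as [[Hirr [Htr [Htot Hwf]]] Hcard].
  destruct HI as [I0 [Isub [Iun [Itop Ibd]]]].
  assert (nomax : forall i, exists j, ltT i j).
  { intro i; apply NNPP; intro H.
    assert (Hm : forall y, ~ ltT i y) by (intros y Hy; apply H; eauto).
    assert (Hnb : ~ bounded ltT (fun x => x = i)).
    { intros [a Ha]. apply (Hm a). apply Ha; reflexivity. }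
    destruct (Hreg _ Hnb) as [f Hf].
    assert (Hu : forall u v : {x : Th | x = i}, u = v).
    { intros [x px] [y py]. subst; try (f_equal; apply proof_irrelevance). }
    assert (g 0 = g 1) by (apply Hf; apply Hu).
    apply Hg in H0. discriminate. }
  assert (smallb : forall w : Th -> Prop, small w -> bounded ltT w).
  { intros w Hw. apply NNPP; intro Hn. apply Hw. apply Hreg; exact Hn. }
  split.
  - intro Hnd. unfold indecomposable in Hnd.
    apply not_all_ex_not in Hnd. destruct Hnd as [A HA].
    apply imply_to_and in HA. destruct HA as [HAp HAw].
    assert (HAs : forall w : Th -> Prop, small w -> I (fun x => exists i, w i /\ A i x)).
    { intros w Hw. apply NNPP; intro Hn. apply HAw. exists w; auto. }
    assert (Hlt : forall i, I (fun x => exists j, ltT j i /\ A j x)).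
    { intro i. apply (HAs (fun j => ltT j i)). intros [f Hf]. apply (Hcard i).
      exists f; exact Hf. }
    set (A' := fun k x => A k x /\ forall l, ltT l k -> ~ A l x).
    assert (least : forall x j, A j x -> exists k, A' k x /\ leT ltT k j).
    { intros x j. induction j as [j IH] using (well_founded_ind Hwf). intro Hj.
      destruct (classic (exists l, ltT l j /\ A l x)) as [[l [Hl1 Hl2]]|Hno].
      - destruct (IH l Hl1 Hl2) as [k [Hk1 Hk2]]. exists k; split; auto.
        left. destruct Hk2 as [Hk2|Hk2]; [eapply Htr; eauto | subst; auto].
      - exists j. split; [|right; reflexivity]. split; auto.
        intros l Hl Hal. apply Hno; eauto. }
    exists (fun i x => exists k, leT ltT i k /\ A' k x). split; [|split].
    + intros i HB. apply HAp.
      apply (Isub _ (fun x => (exists j, ltT j i /\ A j x) \/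
                              (exists k, leT ltT i k /\ A' k x))).
      * apply Iun; auto.
      * intros x [j Hj]. destruct (least x j Hj) as [k [Hk _]].
        destruct (Htot k i) as [H|[H|H]].
        -- left. exists k; split; auto. apply Hk.
        -- right. exists k. split; auto. right; auto.
        -- right. exists k. split; auto. left; auto.
    + assert (Hd : forall i j, I (fun x => (exists k, leT ltT i k /\ A' k x) /\
                                          ~ (exists k, leT ltT j k /\ A' k x))).
      { intros i j. apply (Isub _ _ (Hlt j)).
        intros x [[k [Hk1 Hk2]] Hn]. exists k. split; [|apply Hk2].
        destruct (Htot k j) as [H|[H|H]]; auto.
        - exfalso; apply Hn; exists k; split; auto; right; auto.
        - exfalso; apply Hn; exists k; split; auto; left; auto. }
      intros i j; split; apply Hd.
    + intros x Hx. destruct (Hx (g 0)) as [j [_ [k0 [_ Hk0]]]].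
      destruct (nomax k0) as [i Hi].
      destruct (Hx i) as [j' [Hj' [k [Hk Hk']]]].
      assert (ltT k0 k).
      { destruct Hj' as [Hj'|Hj']; destruct Hk as [Hk|Hk]; subst; eauto. }
      apply (proj2 Hk' k0 H). apply Hk0.
  - intros [A [Hpos [Heq Hls]]] Hind.
    set (C := fun i x => A (g 0) x /\ forall j, leT ltT i j -> ~ A j x).
    destruct (Hind C) as [w [Hw Hwp]].
    + intro HC. apply (Hpos (g 0)). apply (Isub _ _ HC).
      intros x Hx. specialize (Hls x).
      apply not_all_ex_not in Hls. destruct Hls as [i Hi].
      exists i. split; auto. intros j Hj Haj. apply Hi. exists j; auto.
    + apply Hwp. destruct (smallb w Hw) as [a Ha].
      apply (Isub _ _ (proj1 (Heq (g 0) a))).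
      intros x [i [Hwi [Hx0 Hx]]]. split; auto.
      apply Hx. left. apply Ha; auto.
Qed.
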